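(* Let $\alpha \in [0, 1/10)$, let $G$ be an abelian group, let $A$ be a non-empty finite subset of $G$, and let $H$ be a finite subgroup of $G$. If $d(U_A, U_H) \le \alpha$, then there exists $x \in G$ such that \[|A \,\Delta\, (H + \{x\})| \le 10\, \alpha\, |H|.\]
   Context: $\log$ is the natural logarithm. For a random variable $X$ with finite range $R$, $\mathbb{H}(X) = -\sum_{x\in R}\mathbb{P}(X=x)\log \mathbb{P}(X=x)$ is its Shannon entropy. For a non-empty finite set $A$, $U_A$ denotes a random variable uniformly distributed on $A$. For random variables $X,Y$ with finite range in an abelian group, the entropic Ruzsa distance is $d(X,Y) = \mathbb{H}(X'+Y') - (\mathbb{H}(X')+\mathbb{H}(Y'))/2$, where $X',Y'$ are independent with the same distributions as $X,Y$ respectively. $\Delta$ denotes symmetric difference and $H+\{x\}=\{h+x: h\in H\}$. *)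

(* Defs.v *)
From HB Require Import structures.
From mathcomp Require Import all_boot all_order all_algebra.
From mathcomp Require Import finmap.
From mathcomp Require Import reals exp.
Set Implicit Arguments. Unset Strict Implicit. Unset Printing Implicit Defensive.
Import Order.TTheory GRing.Theory Num.Theory.
Local Open Scope fset_scope.
Local Open Scope ring_scope.

Section Defs.
Variables (R : realType) (G : zmodType).

Definition is_subgroup (H : {fset G}) : Prop :=
  0 \in H /\ (forall x y, x \in H -> y \in H -> x - y \in H).

(* Shannon entropy (natural log) of a random variable with finite range S and
   probability mass function p : G -> R (p x = P(X = x)). *)
Definition entropy (S : {fset G}) (p : G -> R) : R :=
  - \sum_(x <- S) p x * ln (p x).

Definition unif (A : {fset G}) (x : G) : R :=
  if x \in A then (#|` A |%:R)^-1 else 0.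

Definition sumset (S T : {fset G}) : {fset G} := [fset a + b | a in S, b in T].

(* distribution of X' + Y' for independent X' (range S, pmf p), Y' (range T, pmf q) *)
Definition conv (S : {fset G}) (p : G -> R) (T : {fset G}) (q : G -> R) (s : G) : R :=
  \sum_(a <- S) \sum_(b <- T) (if a + b == s then p a * q b else 0).

Definition ruzsa_dist (S : {fset G}) (p : G -> R) (T : {fset G}) (q : G -> R) : R :=
  entropy (sumset S T) (conv S p T q) - (entropy S p + entropy T q) / 2.

Definition translate (H : {fset G}) (x : G) : {fset G} := [fset h + x | h in H].

Definition symdiff (A B : {fset G}) : {fset G} := (A `\` B) `|` (B `\` A).

End Defs.

(* Main.v *)
Require Import Defs.
From HB Require Import structures.
From mathcomp Require Import all_boot all_order all_algebra.
From mathcomp Require Import finmap.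
From mathcomp Require Import reals exp.
From mathcomp Require Import lra.
Import Order.TTheory GRing.Theory Num.Theory.
Local Open Scope fset_scope.
Local Open Scope ring_scope.

Lemma sum_const_seq (V : nmodType) (T : Type) (r : seq T) (c : V) :
  \sum_(x <- r) c = c *+ size r.
Proof. elim: r => [|x r IH]; first by rewrite big_nil.
by rewrite big_cons IH mulrS. Qed.

Lemma sum_pred1_seq (V : nmodType) (T : eqType) (r : seq T) (x : T) (f : T -> V) :
  uniq r -> \sum_(s <- r) (if x == s then f s else 0) = if x \in r then f x else 0.
Proof.
elim: r => [|y r IH]; first by rewrite big_nil.
rewrite big_cons /= in_cons => /andP [yr ur]; rewrite IH //.
case: eqP => [->|_] /=; last by rewrite add0r.
by rewrite (negbTE yr) addr0.
Qed.

Lemma seq_argmax (T : eqType) (f : T -> nat) (r : seq T) (x0 : T) :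
  x0 \in r -> exists2 x, x \in r & forall y, y \in r -> (f y <= f x)%N.
Proof.
elim: r x0 => [//|a r IH] x0 _.
case: r IH => [|b r] IH.
  by exists a; rewrite ?mem_head // => y; rewrite inE => /eqP ->.
have [x xr hx] := IH b (mem_head _ _).
case: (leqP (f a) (f x)) => h.
  exists x; first by rewrite in_cons xr orbT.
  by move=> y; rewrite in_cons => /orP [/eqP ->|/hx].
exists a; first by rewrite mem_head.
move=> y; rewrite in_cons => /orP [/eqP ->//|/hx] hy.
by apply: leq_trans hy (ltnW h).
Qed.

Lemma ln_lb (R : realType) (t : R) : 0 < t -> 1 - t^-1 <= ln t.
Proof.
move=> t0.
have h := @le_ln1Dx R (t^-1 - 1).
have : -1 < t^-1 - 1 by have := t0; rewrite -invr_gt0; lra.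
move/h; rewrite addrC subrK lnV ?posrE //.
lra.
Qed.

Lemma final_ineq (R : realType) (a h m al : R) : 0 < m -> m <= a -> m <= h ->
  0 <= al -> al < 10^-1 -> 1 - (m * m) / (a * h) <= 2 * al ->
  a + h - 2 * m <= 10 * al * h.
Proof.
move=> m0 ma mh a0 a1 H.
have a0' : 0 < a by apply: lt_le_trans ma.
have h0 : 0 < h by apply: lt_le_trans mh.
have ah0 : 0 < a * h by apply: mulr_gt0.
have H2 : a * h - m * m <= 2 * al * (a * h).
  move: H; rewrite -(ler_pM2r ah0) mulrBl mul1r mulfVK ?gt_eqF //.
have a1' : al * 10 < 1.
  move: a1; rewrite -(ltr_pM2r (_ : (0:R) < 10)) ?mulVf //; lra.
have H3 : m * (a + h - 2 * m) <= a * h - m * m by nra.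
have H4 : 4 * a <= 5 * m by nra.
nra.
Qed.
Section S2.
Variables (R : realType) (G : zmodType).

Lemma entropy_unif (A : {fset G}) : A != fset0 ->
  entropy A (unif R A) = ln (#|` A|%:R).
Proof.
move=> An0.
have a0 : (#|` A|%:R : R) != 0 by rewrite pnatr_eq0 -lt0n cardfs_gt0.
rewrite /entropy (eq_big_seq (fun _ => (#|` A|%:R : R)^-1 * ln ((#|` A|%:R)^-1))); last first.
  by move=> x xA; rewrite /unif xA.
have ap : (0:R) < #|` A|%:R by rewrite lt_neqAle eq_sym a0 ler0n.
rewrite sum_const_seq -mulrnAl.
have -> : forall c : R, c *+ #|` A| = c * #|` A|%:R by move=> c; rewrite mulr_natr.
by rewrite mulVf // mul1r lnV ?opprK // posrE.
Qed.

Lemma sum_unif (A : {fset G}) : A != fset0 -> \sum_(x <- A) unif R A x = 1.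
Proof.
move=> An0.
have a0 : (#|` A|%:R : R) != 0 by rewrite pnatr_eq0 -lt0n cardfs_gt0.
rewrite (eq_big_seq (fun _ => (#|` A|%:R : R)^-1)); last first.
  by move=> x xA; rewrite /unif xA.
rewrite sum_const_seq.
have -> : forall c : R, c *+ #|` A| = c * #|` A|%:R by move=> c; rewrite mulr_natr.
by rewrite mulVf.
Qed.

Lemma sum_conv (A H : {fset G}) : A != fset0 -> H != fset0 ->
  \sum_(s <- sumset A H) conv A (unif R A) H (unif R H) s = 1.
Proof.
move=> An0 Hn0.
rewrite /conv exchange_big /=.
under eq_bigr do rewrite exchange_big /=.
rewrite (eq_big_seq (fun x => \sum_(y <- H) unif R A x * unif R H y)); last first.
  move=> x xA; apply: eq_big_seq => y yH.
  rewrite sum_pred1_seq ?fset_uniq //.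
  have -> : x + y \in sumset A H by rewrite /sumset; apply: in_imfset2.
  by [].
rewrite (eq_bigr (fun x => unif R A x * \sum_(y <- H) unif R H y)); last first.
  by move=> x _; rewrite mulr_sumr.
by rewrite -mulr_suml !sum_unif // mul1r.
Qed.

End S2.
Section S3.
Variables (R : realType) (G : zmodType).

Lemma mem_translate (H : {fset G}) s x : is_subgroup H ->
  (x \in translate H s) = (s - x \in H).
Proof.
move=> [H0 HB].
have HN : forall y, y \in H -> - y \in H.
  by move=> y yH; rewrite -sub0r; apply: HB.
apply/imfsetP/idP => /=.
  move=> [y yH ->]. by rewrite (addrC y s) opprD addrA subrr sub0r; apply: HN.
move=> h; exists (- (s - x)); first by apply: HN.
by rewrite opprB subrK.
Qed.

Lemma card_translate (H : {fset G}) s : #|` translate H s| = #|` H|.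
Proof.
rewrite /translate card_imfset //=; last by move=> x y; apply: addIr.
Qed.

Lemma conv_eq (A H : {fset G}) s : is_subgroup H -> A != fset0 -> H != fset0 ->
  conv A (unif R A) H (unif R H) s =
  (#|` A `&` translate H s|)%:R / (#|` A|%:R * #|` H|%:R).
Proof.
move=> Hs An0 Hn0.
set k := ((#|` A|%:R : R)^-1 * (#|` H|%:R)^-1).
rewrite /conv (eq_big_seq (fun x => if x \in translate H s then k else 0)); last first.
  move=> x xA.
  rewrite (eq_big_seq (fun y => if s - x == y then k else 0)); last first.
    move=> y yH; rewrite /unif xA yH.
    have -> : (x + y == s) = (s - x == y).
      by rewrite subr_eq addrC eq_sym.
    by [].
  by rewrite (@sum_pred1_seq _ _ _ _ (fun _ => k)) ?fset_uniq // mem_translate.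
rewrite -big_mkcond /= big_fset_condE sum_const_seq.
have -> : [fset i in A | i \in translate H s] = A `&` translate H s.
  by apply/fsetP => x; rewrite !inE.
by rewrite invfM mulr_natl.
Qed.

Lemma card_symdiff (A T : {fset G}) :
  (#|` symdiff A T| <= (#|` A| - #|` A `&` T|) + (#|` T| - #|` A `&` T|))%N.
Proof.
have e2 : #|` T `\` A| = (#|` T| - #|` A `&` T|)%N by rewrite cardfsD fsetIC.
rewrite /symdiff -cardfsD -e2 -(cardfsUI (A `\` T) (T `\` A)).
by apply: leq_addr.
Qed.

End S3.
Theorem mainTheorem3 (R : realType) (G : zmodType) (alpha : R)
    (A H : {fset G}) :
  0 <= alpha -> alpha < 10^-1 ->
  A != fset0 ->
  is_subgroup H ->
  ruzsa_dist A (unif R A) H (unif R H) <= alpha ->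
  exists x : G,
    (#|` symdiff A (translate H x) |)%:R <= 10 * alpha * (#|` H |)%:R.
Proof.
move=> al0 al1 An0 Hs Hd.
have H0 : 0 \in H by case: Hs.
have Hn0 : H != fset0 by apply/fset0Pn; exists 0.
have /fset0Pn [a0 a0A] := An0.
have a0S : a0 + 0 \in sumset A H by apply: in_imfset2.
have [s sS smax] := @seq_argmax _ (fun s => #|` A `&` translate H s|) (sumset A H) (a0 + 0) a0S.
exists s.
set m := #|` A `&` translate H s|.
have mA : (m <= #|` A|)%N by rewrite -(cardfsID (translate H s) A) leq_addr.
have mH : (m <= #|` H|)%N.
  by rewrite -(card_translate _ H s) /m fsetIC -(cardfsID A (translate H s)) leq_addr.
have m1 : (0 < m)%N.
  apply: leq_trans (smax _ a0S); rewrite cardfs_gt0; apply/fset0Pn; exists a0.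
  by rewrite in_fsetI a0A mem_translate // addr0 subrr.
set ar : R := #|` A|%:R; set hr : R := #|` H|%:R; set mr : R := m%:R.
have mr0 : 0 < mr by rewrite ltr0n.
have mra : mr <= ar by rewrite ler_nat.
have mrh : mr <= hr by rewrite ler_nat.
have ar0 : 0 < ar by apply: lt_le_trans mra.
have hr0 : 0 < hr by apply: lt_le_trans mrh.
have ah0 : 0 < ar * hr by apply: mulr_gt0.
have Hent : - entropy (sumset A H) (conv A (unif R A) H (unif R H)) <=
   ln (mr / (ar * hr)).
  rewrite /entropy opprK -[X in _ <= X]mul1r -(@sum_conv R G A H An0 Hn0) mulr_suml.
  rewrite [X in X <= _]big_seq [X in _ <= X]big_seq; apply: ler_sum => t tS.
  rewrite conv_eq //.
  have nt : (#|` A `&` translate H t| <= m)%N by apply: smax.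
  set nt' := #|` A `&` translate H t| in nt *.
  have [->|nt0] := eqVneq nt' 0%N; first by rewrite !mul0r.
  have ntp : (0 : R) < nt'%:R by rewrite ltr0n lt0n.
  have cp : 0 < nt'%:R / (ar * hr) by apply: divr_gt0.
  apply: ler_wpM2l; first exact: ltW.
    rewrite ler_ln ?posrE //; last by apply: divr_gt0.
  by rewrite ler_pM2r ?invr_gt0 // ler_nat.
have Hln : ln (mr / (ar * hr)) = ln mr - (ln ar + ln hr).
  by rewrite ln_div ?posrE // lnM ?posrE.
have Hlt : ln (ar * hr / (mr * mr)) = ln ar + ln hr - 2 * ln mr.
  rewrite ln_div ?posrE ?mulr_gt0 // !lnM ?posrE //; lra.
have Hd' : ln (ar * hr / (mr * mr)) <= 2 * alpha.
  move: Hd; rewrite /ruzsa_dist !entropy_unif // -/ar -/hr Hlt; lra.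
have Hb := @ln_lb R (ar * hr / (mr * mr)).
have Hk : 1 - mr * mr / (ar * hr) <= 2 * alpha.
  have := Hb (divr_gt0 ah0 (mulr_gt0 mr0 mr0)); rewrite invf_div; lra.
have Hf := @final_ineq R ar hr mr alpha mr0 mra mrh al0 al1 Hk.
apply: le_trans Hf.
have := card_symdiff _ A (translate H s); rewrite card_translate -/m.
rewrite -(ler_nat R) natrD !natrB //. rewrite -/ar -/hr -/mr; lra.
Qed.
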